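(* Let $u$ be a non-trivial u-p-word for $n$-permutations, and let $f$ be the number of occurrences of $\Diamond$ in $u$. Then $n\leq 3f+1$.
   Context: An $n$-permutation is a permutation of $\{1,\ldots,n\}$. For a word $w$ of distinct numbers, $\mathrm{red}(w)$ is obtained by replacing the $i$-th smallest letter by $i$. Let $\Diamond$ be a symbol not among the integers. A word $f_1\cdots f_n$ over the positive integers together with $\Diamond$, whose integer letters are pairwise distinct, covers an $n$-permutation $\pi$ if one can substitute real numbers for the occurrences of $\Diamond$ (independently) so that the resulting word has $n$ pairwise distinct entries and reduces to $\pi$; equivalently, $f_i<f_j\iff\pi_i<\pi_j$ for all positions $i,j$ holding integers. A u-p-word for $n$-permutations is a word $u_1\cdots u_N$, $N\geq n$, over this alphabet containing at least one $\Diamond$, such that every factor $u_i\cdots u_{i+n-1}$ ($1\leq i\leq N-n+1$) has pairwise distinct integer letters and every $n$-permutation is covered by exactly one of these factors. A u-p-word is trivial if all of its letters are $\Diamond$. *)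

(* Defs.v *)
From mathcomp Require Import all_boot all_order all_fingroup.
Set Implicit Arguments. Unset Strict Implicit. Unset Printing Implicit Defensive.

Definition letter := option nat.
Notation Diamond := (@None nat).

Definition distinct_ints (w : seq letter) : Prop :=
  forall (i j : nat) (a : nat), i < size w -> j < size w ->
    nth Diamond w i = Some a -> nth Diamond w j = Some a -> i = j.

(* w (of length n, with pairwise distinct integer letters) covers the
   n-permutation pi : 'S_n (pi maps position i to value pi i, values in 0..n-1,
   i.e. shifted by one, which does not affect order comparisons):
   f_i < f_j <-> pi_i < pi_j for all positions i, j holding integers. *)
Definition covers (n : nat) (w : seq letter) (pi : 'S_n) : Prop :=
  forall (i j : 'I_n) (a b : nat),
    nth Diamond w i = Some a -> nth Diamond w j = Some b ->
    (a < b) = (pi i < pi j).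

(* The factor u_{i+1} ... u_{i+n} (0-indexed start position i). *)
Definition factor (n : nat) (u : seq letter) (i : nat) : seq letter :=
  take n (drop i u).

Definition upword (n : nat) (u : seq letter) : Prop :=
  [/\ n <= size u,
      (forall k, Some k \in u -> 0 < k),
      Diamond \in u,
      (forall i, i <= size u - n -> distinct_ints (factor n u i)) &
      (forall pi : 'S_n, exists! i, i <= size u - n /\ covers (factor n u i) pi)].

Definition trivial_word (u : seq letter) : bool := all (pred1 Diamond) u.

(* Main.v *)
Require Import Defs.
From mathcomp Require Import all_boot all_order all_fingroup.
From mathcomp Require Import zify.
Set Implicit Arguments. Unset Strict Implicit. Unset Printing Implicit Defensive.

Lemma rk_lt n (key : nat -> nat) (i : 'I_n) : #|[pred j : 'I_n | key j < key i]| < n.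
Proof.
rewrite -[X in _ < X]card_ord; apply: proper_card; apply/properP; split.
  by apply/subsetP.
by exists i => //; rewrite inE ltnn.
Qed.

Definition rk n (key : nat -> nat) (i : 'I_n) : 'I_n := Ordinal (rk_lt key i).

Lemma rk_mono n (key : nat -> nat) (i j : 'I_n) : key i < key j -> rk key i < rk key j.
Proof.
move=> lt; rewrite /=; apply: proper_card; apply/properP; split.
  apply/subsetP => x; rewrite !inE => h; exact: ltn_trans h lt.
by exists i; rewrite !inE ?ltnn.
Qed.

Lemma rk_inj n (key : nat -> nat) (Hk : forall i j : 'I_n, key i = key j -> i = j) : injective (@rk n key).
Proof.
move=> i j e; case: (ltngtP (key i) (key j)) => h.
- by have := rk_mono h; rewrite e ltnn.
- by have := rk_mono h; rewrite e ltnn.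
- exact: Hk.
Qed.

Definition pk n (key : nat -> nat) (Hk : forall i j : 'I_n, key i = key j -> i = j) : 'S_n :=
  perm (rk_inj Hk).

Lemma pkE n (key : nat -> nat) (Hk : forall i j : 'I_n, key i = key j -> i = j) (i j : 'I_n) :
  (pk Hk i < pk Hk j) = (key i < key j).
Proof.
rewrite !permE; case: (ltngtP (key i) (key j)) => h.
- exact: rk_mono.
- by apply/negbTE; rewrite -leqNgt ltnW // rk_mono.
- by rewrite (Hk _ _ h) ltnn.
Qed.

Definition pn n (pi : 'S_n) (s : nat) : nat :=
  if insub s is Some i then val (pi i) else 0.

Lemma pnE n (pi : 'S_n) s (h : s < n) : pn pi s = pi (Ordinal h).
Proof.
rewrite /pn; case: insubP => [i _ ei|]; last by rewrite h.
by congr (val (pi _)); apply: val_inj.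
Qed.


Lemma size_factor n u i : i + n <= size u -> size (factor n u i) = n.
Proof. move=> h; rewrite /factor size_take size_drop; apply/minn_idPl; lia. Qed.

Lemma nth_factor n u i p : i + n <= size u -> p < n ->
  nth Diamond (factor n u i) p = nth Diamond u (i + p).
Proof. by move=> h hp; rewrite /factor nth_take // nth_drop. Qed.

Definition dcnt (u : seq letter) := count (fun m => nth Diamond u m == Diamond).

Lemma fcntE u : count_mem Diamond u = dcnt u (iota 0 (size u)).
Proof.
by rewrite -{1}(mkseq_nth Diamond u) /mkseq count_map.
Qed.

Lemma dcnt_le u l : uniq l -> all (fun m => m < size u) l ->
  dcnt u l <= count_mem Diamond u.
Proof.
move=> ul al; rewrite fcntE /dcnt -!size_filter; apply: uniq_leq_size.
  exact: filter_uniq.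
move=> m; rewrite !mem_filter => /andP[-> ml]; rewrite mem_iota /=.
by move/allP: al => /(_ m ml).
Qed.

Definition coversb n (w : seq letter) (pi : 'S_n) : bool :=
  [forall x : 'I_n, forall y : 'I_n,
    if (nth Diamond w x, nth Diamond w y) is (Some a, Some b)
    then (a < b) == (pi x < pi y) else true].

Lemma coversP n w (pi : 'S_n) : reflect (covers w pi) (coversb w pi).
Proof.
apply: (iffP forallP) => h.
  move=> x y a b ha hb; have /forallP/(_ y) := h x; rewrite ha hb.
  by move/eqP.
move=> x; apply/forallP => y.
case ha: (nth Diamond w x) => [a|] //; case hb: (nth Diamond w y) => [b|] //.
by apply/eqP; apply: h.
Qed.

Lemma card_pred_ord n (P : pred nat) :
  #|[pred x : 'I_n | P x]| = count P (iota 0 n).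
Proof.
rewrite cardE /enum_mem size_filter -enumT -val_enum_ord count_map.
by apply: eq_count.
Qed.

Lemma union_bound (T : finType) M (A : nat -> {set T}) :
  #|\bigcup_(i < M) A i| <= \sum_(i < M) #|A i|.
Proof.
elim: M => [|M IH]; first by rewrite !big_ord0 cards0.
rewrite !big_ord_recr /=; apply: leq_trans (leq_card_setU _ _) _.
by rewrite leq_add2r.
Qed.


Lemma det_perm n (w : seq letter) (pi1 pi2 : 'S_n) : size w = n ->
  distinct_ints w -> covers w pi1 -> covers w pi2 ->
  (forall x : 'I_n, nth Diamond w x = Diamond -> pi1 x = pi2 x) -> pi1 = pi2.
Proof.
move=> sw dw c1 c2 hD.
have key : forall v (x1 x2 : 'I_n), val (pi1 x1) = v -> val (pi2 x2) = v -> x1 = x2.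
  elim/ltn_ind => v IH x1 x2 e1 e2.
  case h1: (nth Diamond w x1) => [a1|].
    case h2: (nth Diamond w x2) => [a2|].
      case: (eqVneq x1 x2) => // ne.
      have na : a1 != a2.
        apply/eqP => ea; subst a2.
        have := dw x1 x2 a1; rewrite sw => /(_ (ltn_ord _) (ltn_ord _) h1 h2) /val_inj e; by rewrite e eqxx in ne.
      case: (ltngtP a1 a2) => h; last by rewrite h eqxx in na.
      * have := c2 _ _ _ _ h1 h2; rewrite h => /esym lt.
        have lt' : val (pi2 x1) < v by rewrite -e2.
        have := IH _ lt' ((pi1^-1)%g (pi2 x1)) x1; rewrite permKV => /(_ erefl erefl) ex.
        have := e1; rewrite -ex permKV => e; move: lt'; rewrite e ltnn //.
      * have := c1 _ _ _ _ h2 h1; rewrite h => /esym lt.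
        have lt' : val (pi1 x2) < v by rewrite -e1.
        have := IH _ lt' x2 ((pi2^-1)%g (pi1 x2)); rewrite permKV => /(_ erefl erefl) ex.
        have := e2; rewrite ex permKV => e; move: lt'; rewrite e ltnn //.
    have e := hD _ h2; apply: (@perm_inj _ pi1); apply: val_inj; by rewrite e e1 e2.
  have e := hD _ h1; apply: (@perm_inj _ pi2); apply: val_inj; by rewrite -e e1 e2.
apply/permP => x; apply: val_inj.
have := key _ x ((pi2^-1)%g (pi1 x)) erefl; rewrite permKV => /(_ erefl) ex.
by rewrite {2}ex permKV.
Qed.

Definition DP (n : nat) (w : seq letter) : pred 'I_n := fun x => nth Diamond w x == Diamond.
Notation Dty n w := {x : 'I_n | @DP n w x}.

Lemma card_cov n (w : seq letter) : size w = n -> distinct_ints w ->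
  #|[set pi : 'S_n | coversb w pi]| <= n ^_ (count_mem Diamond w).
Proof.
move=> sw dw.
have cD : #|{: Dty n w}| = count_mem Diamond w.
  rewrite card_sig (card_pred_ord n (fun m => nth Diamond w m == Diamond)).
  by rewrite fcntE sw.
pose phi (pi : 'S_n) : {ffun Dty n w -> 'I_n} := [ffun x => pi (val x)].
rewrite -cD -[X in _ <= X ^_ _]card_ord -card_inj_ffuns.
rewrite -(card_in_imset (f := phi)); last first.
  move=> p1 p2; rewrite !inE => /coversP h1 /coversP h2 e.
  apply: (det_perm sw dw h1 h2) => x hx.
  have hx' : @DP n w x by rewrite /DP hx.
  by have := congr1 (fun g : {ffun Dty n w -> 'I_n} => g (exist _ x hx')) e; rewrite !ffunE.
apply: subset_leq_card; apply/subsetP => g /imsetP [p _ ->]; rewrite inE.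
apply/injectiveP => x y; rewrite !ffunE => /perm_inj; exact: val_inj.
Qed.


Lemma nth_factor_rev n u i p : i + n <= size u -> p < n ->
  nth Diamond (factor n (rev u) i) p =
  nth Diamond (factor n u (size u - n - i)) (n - 1 - p).
Proof.
move=> h hp.
have h1 : i + n <= size (rev u) by rewrite size_rev.
have h2 : i + p < size u by lia.
rewrite (nth_factor h1 hp) (nth_rev _ h2).
have h3 : size u - n - i + n <= size u by lia.
have h4 : n - 1 - p < n by lia.
rewrite (nth_factor h3 h4). congr nth; lia.
Qed.

Definition rperm n : 'S_n := perm (@rev_ord_inj n).

Lemma covers_rev n u i (pi : 'S_n) : i + n <= size u ->
  covers (factor n (rev u) i) pi <->
  covers (factor n u (size u - n - i)) (rperm n * pi)%g.
Proof.
move=> h; split=> c x y a b ha hb; have lx := ltn_ord x; have ly := ltn_ord y.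
  rewrite !permM !permE; apply: c.
    by rewrite nth_factor_rev ?ltn_ord // -ha /=; congr nth; lia.
  by rewrite nth_factor_rev ?ltn_ord // -hb /=; congr nth; lia.
have := c (rev_ord x) (rev_ord y) a b.
rewrite !permM !permE !rev_ordK; apply.
  by rewrite -ha nth_factor_rev ?ltn_ord //=; congr nth; lia.
by rewrite -hb nth_factor_rev ?ltn_ord //=; congr nth; lia.
Qed.

Lemma upword_rev n u : upword n u -> upword n (rev u).
Proof.
case=> hn hpos hd hdist huniq; split.
- by rewrite size_rev.
- by move=> k; rewrite mem_rev; apply: hpos.
- by rewrite mem_rev.
- move=> i; rewrite size_rev => hi x y a.
  have hin : i + n <= size u by lia.
  rewrite size_factor ?size_rev // => hx hy ex ey.
  rewrite nth_factor_rev // in ex; rewrite nth_factor_rev // in ey.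
  have := hdist (size u - n - i) (leq_subr _ _) (n - 1 - x) (n - 1 - y) a.
  rewrite size_factor; last lia.
  have -> : n - 1 - x < n by lia.
  have -> : n - 1 - y < n by lia.
  move=> /(_ erefl erefl ex ey); lia.
- move=> pi; have [i [[hi ci] ui]] := huniq (rperm n * pi)%g.
  exists (size u - n - i); split.
    split; first by rewrite size_rev leq_subr.
    apply/covers_rev; first lia.
    by have -> : size u - n - (size u - n - i) = i by lia.
  move=> j [hj cj]; rewrite size_rev in hj.
  have := ui (size u - n - j); rewrite -covers_rev; last lia.
  move=> /(_ (conj (leq_subr _ _) cj)); lia.
Qed.


Lemma good_pos n (u : seq letter) k : 2 * count_mem Diamond u + 3 <= n -> k + n < size u ->
  exists p q, [/\ p < n.-1, q < n.-1, p != q &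
    [/\ nth Diamond u (k.+1 + p) != None, nth Diamond u (k.+1 + q) != None,
        nth Diamond u p != None & nth Diamond u q != None]].
Proof.
move=> hf hkn.
pose A := fun s => nth Diamond u (k.+1 + s) == None.
pose B := fun s => nth Diamond u s == None.
pose P := fun s => (nth Diamond u (k.+1 + s) != None) && (nth Diamond u s != None).
have cA : count A (iota 0 n.-1) <= count_mem Diamond u.
  have -> : count A (iota 0 n.-1) = dcnt u (iota (k.+1 + 0) n.-1).
    by rewrite iotaDl /dcnt count_map.
  apply: dcnt_le; first exact: iota_uniq.
  by apply/allP => m; rewrite mem_iota => /andP[_ h] /=; lia.
have cB : count B (iota 0 n.-1) <= count_mem Diamond u.
  apply: dcnt_le; first exact: iota_uniq.
  by apply/allP => m; rewrite mem_iota => /andP[_ h] /=; lia.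
have cP : 2 <= count P (iota 0 n.-1).
  have h1 := count_predC P (iota 0 n.-1).
  have h2 : count (predC P) (iota 0 n.-1) <= count (predU A B) (iota 0 n.-1).
    apply: sub_count => s; rewrite /= /P /A /B; case: (nth Diamond u (k.+1 + s)); case: (nth Diamond u s) => //.
  have h3 := count_predUI A B (iota 0 n.-1).
  rewrite size_iota in h1; lia.
pose l := filter P (iota 0 n.-1).
have sl : 2 <= size l by rewrite size_filter.
have ul : uniq l by apply: filter_uniq; exact: iota_uniq.
have inl : forall i, i < size l -> let x := nth 0 l i in x < n.-1 /\ P x.
  move=> i hi /=; have := mem_nth 0 hi; rewrite mem_filter mem_iota => /andP[-> /andP[_ ->]].
  by [].
have [h0a h0b] := inl 0 ltac:(lia).
have [h1a h1b] := inl 1 ltac:(lia).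
exists (nth 0 l 0), (nth 0 l 1); split => //.
  by rewrite nth_uniq // (leq_trans _ sl).
by move/andP: h0b => [-> ->]; move/andP: h1b => [-> ->].
Qed.


Lemma killer n (u : seq letter) k : upword n u -> 2 * count_mem Diamond u + 3 <= n ->
  nth Diamond u k = Diamond -> k + n < size u -> nth Diamond u (k + n) = Diamond.
Proof.
move=> up hf hk hkn.
case hy: (nth Diamond u (k + n)) => [y|] //; exfalso.
have up0 := up; case: up0 => hn hpos hdi hdist huniq.
have [p [q [hp hq pq [Up Uq U0p U0q]]]] := good_pos hf hkn.
have WEo : forall j (x : 'I_n), j <= size u - n ->
    nth Diamond (factor n u j) x = nth Diamond u (j + x).
  by move=> j x hj; apply: nth_factor => //; lia.
have uniqW : forall (pi : 'S_n) j1 j2, j1 <= size u - n -> j2 <= size u - n ->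
    covers (factor n u j1) pi -> covers (factor n u j2) pi -> j1 = j2.
  move=> pi j1 j2 h1 h2 c1 c2; have [i0 [_ u0]] := huniq pi.
  by rewrite -(u0 j1 (conj h1 c1)) -(u0 j2 (conj h2 c2)).
have distW : forall j s s' a, j <= size u - n -> s < n -> s' < n ->
    nth Diamond u (j + s) = Some a -> nth Diamond u (j + s') = Some a -> s = s'.
  move=> j s s' a hj hs hs' e e'.
  have hjn : j + n <= size u by lia.
  apply: (hdist j hj s s' a); rewrite ?size_factor ?nth_factor //.
have hk0 : k <= size u - n by lia.
have hk1 : k.+1 <= size u - n by lia.
pose g s := odflt 0 (nth Diamond u (k.+1 + s)) * n + s.
have g_ord : forall s s' a b, s < n -> s' < n -> nth Diamond u (k.+1 + s) = Some a ->
    nth Diamond u (k.+1 + s') = Some b -> (a < b) = (g s < g s').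
  move=> s s' a b hs hs' ea eb; rewrite /g ea eb /=.
  case: (ltngtP a b) => h.
  - by apply/esym; nia.
  - by apply/esym/negbTE; rewrite -leqNgt; nia.
  - subst b; have := distW _ _ _ _ hk1 hs hs' ea eb => ->; by rewrite ltnn.
have g_inj : forall s s' : 'I_n, g s = g s' -> s = s'.
  move=> s s' e; apply: val_inj; have := congr1 (modn^~ n) e.
  by rewrite /g !modnMDl !modn_small.
pose pstar := pk g_inj.
have cstar : covers (factor n u k.+1) pstar.
  move=> x z a b; rewrite !(WEo _ _ hk1) => ea eb; rewrite pkE.
  exact: g_ord ea eb.
have n1 : n.-1 < n by lia.
pose ordN : 'I_n := Ordinal n1.
pose keyr t s := if s == n.-1 then 2 * t else 2 * g s + 1.
have keyr_inj : forall t (i j : 'I_n), keyr t i = keyr t j -> i = j.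
  move=> t i j; rewrite /keyr; case: eqP => hi; case: eqP => hj e.
  - by apply: ord_inj; rewrite hi hj.
  - lia.
  - lia.
  - by apply: (g_inj); lia.
pose rho t := pk (keyr_inj t).
have rho_head : forall t (s s' : 'I_n) a b, s < n.-1 -> s' < n.-1 ->
    nth Diamond u (k.+1 + s) = Some a -> nth Diamond u (k.+1 + s') = Some b ->
    (a < b) = (rho t s < rho t s').
  move=> t s s' a b hs hs' ea eb; rewrite pkE /keyr.
  rewrite (ltn_eqF hs) (ltn_eqF hs') ltn_add2r ltn_mul2l /=.
  exact: g_ord ea eb.
have sigE : forall t (s : 'I_n), s < n.-1 ->
    (rho t s < rho t ordN) = (2 * g s + 1 < 2 * t).
  by move=> t s hs; rewrite pkE /keyr (ltn_eqF hs) /= eqxx.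
have claim1 : forall pi : 'S_n,
    (forall (s s' : 'I_n) a b, s < n.-1 -> s' < n.-1 ->
       nth Diamond u (k.+1 + s) = Some a -> nth Diamond u (k.+1 + s') = Some b ->
       (a < b) = (pi s < pi s')) ->
    forall j, j <= size u - n -> covers (factor n u j) pi -> j = 0 \/ j = k.+1.
  move=> pi hpi [|j'] hj cj; first by left.
  right.
  have hj' : j' <= size u - n by lia.
  pose c := odflt 0 (nth Diamond u j').
  pose m := \max_(s : 'I_n | (s < n.-1) &&
       (if nth Diamond u (j'.+1 + s) is Some a then a < c else false)) (pi s).+1.
  pose key' a := if a is a'.+1 then 2 * pn pi a' + 1 else 2 * m.
  have key'_inj : forall x z : 'I_n, key' x = key' z -> x = z.
    move=> [[|x'] hx] [[|z'] hz]; rewrite /key' /= => e.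
    - exact: ord_inj.
    - lia.
    - lia.
    have hx1 : x' < n by lia.
    have hz1 : z' < n by lia.
    rewrite (pnE pi hx1) (pnE pi hz1) in e.
    have : pi (Ordinal hx1) = pi (Ordinal hz1) by apply: ord_inj; lia.
    move/perm_inj => [] exz; apply: ord_inj => /=; by rewrite exz.
  pose rho' := pk key'_inj.
  have cWk : covers (factor n u k) rho'.
    move=> [[|x'] hx] [[|z'] hz] a b; rewrite !(WEo _ _ hk0) /= ?addn0 ?hk //.
    move=> ea eb; rewrite pkE /key' /=.
    have hx1 : x' < n by lia.
    have hz1 : z' < n by lia.
    rewrite (pnE pi hx1) (pnE pi hz1) ltn_add2r ltn_mul2l /=.
    apply: hpi => /=; [lia|lia| |]; by rewrite addSnnS.
  have cmp : forall z' (hz : z' < n) b ci, z' < n.-1 ->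
      nth Diamond u (j'.+1 + z') = Some b -> nth Diamond u j' = Some ci ->
      (b != ci) && ((ci < b) == (m <= pi (Ordinal hz))).
    move=> z' hz b ci hz' eb ec.
    have ne : b != ci.
      apply/eqP => e; subst b.
      have := distW j' 0 z'.+1 ci hj' ltac:(lia) ltac:(lia).
      by rewrite addn0 -addSnnS => /(_ ec eb).
    rewrite ne /=; apply/eqP.
    case: (ltngtP ci b) => h.
    - apply/esym/bigmax_leqP => s /andP[hs]; rewrite /c ec /=.
      case es: (nth Diamond u (j'.+1 + s)) => [a|] // ha.
      have := cj s (Ordinal hz) a b; rewrite !(WEo _ _ hj) /= => /(_ es eb).
      have -> : a < b by move: ha => /= ha; lia.
      by move/esym.
    - apply/esym/negbTE; rewrite -ltnNge.
      have Pz : (fun s : 'I_n => (s < n.-1) &&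
         (if nth Diamond u (j'.+1 + s) is Some a then a < c else false)) (Ordinal hz).
        by rewrite /= eb /c ec /= h hz'.
      exact: (@leq_bigmax_cond _ _ (fun s => (pi s).+1) (Ordinal hz) Pz).
    - by rewrite h eqxx in ne.
  have cWj : covers (factor n u j') rho'.
    move=> [[|x'] hx] [[|z'] hz] a b; rewrite !(WEo _ _ hj') /= ?addn0 => ea eb;
      rewrite pkE /key' /=.
    - by rewrite ea in eb; case: eb => ->; rewrite !ltnn.
    - have hz1 : z' < n by lia.
      have := cmp z' hz1 b a ltac:(lia) ltac:(by rewrite addSnnS) ea.
      rewrite (pnE pi hz1) => /andP[ne /eqP e]; lia.
    - have hx1 : x' < n by lia.
      have := cmp x' hx1 a b ltac:(lia) ltac:(by rewrite addSnnS) eb.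
      rewrite (pnE pi hx1) => /andP[ne /eqP e]; lia.
    - have hx1 : x' < n by lia.
      have hz1 : z' < n by lia.
      have := cj (Ordinal hx1) (Ordinal hz1) a b; rewrite !(WEo _ _ hj) /= !addSnnS.
      move=> /(_ ea eb); rewrite (pnE pi hx1) (pnE pi hz1); lia.
  have := uniqW rho' j' k hj' hk0 cWj cWk; lia.
have hp1 : p < n by lia.
have hq1 : q < n by lia.
have claim2 : forall j t t', (j = 0 \/ j = k.+1) ->
    nth Diamond u (j + p) != None -> nth Diamond u (j + q) != None ->
    nth Diamond u (j + n.-1) != None ->
    covers (factor n u j) (rho t) -> covers (factor n u j) (rho t') ->
    ((2 * g p + 1 < 2 * t) = (2 * g p + 1 < 2 * t')) /\
    ((2 * g q + 1 < 2 * t) = (2 * g q + 1 < 2 * t')).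
  move=> j t t' hj Up' Uq' Ul c1 c2.
  have hj0 : j <= size u - n by case: hj => ->; lia.
  case ep: (nth Diamond u (j + p)) Up' => [ap|] // _.
  case eq': (nth Diamond u (j + q)) Uq' => [aq|] // _.
  case el: (nth Diamond u (j + n.-1)) Ul => [cl|] // _.
  have fact : forall r, covers (factor n u j) (rho r) ->
      (ap < cl) = (2 * g p + 1 < 2 * r) /\ (aq < cl) = (2 * g q + 1 < 2 * r).
    move=> r c; split.
      have := c (Ordinal hp1) ordN ap cl; rewrite !(WEo _ _ hj0) /= => /(_ ep el).
      by rewrite (sigE r (Ordinal hp1) hp).
    have := c (Ordinal hq1) ordN aq cl; rewrite !(WEo _ _ hj0) /= => /(_ eq' el).
    by rewrite (sigE r (Ordinal hq1) hq).
  have [a1 a2] := fact t c1; have [b1 b2] := fact t' c2.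
  by rewrite -a1 -a2 -b1 -b2.
have gpq : g p != g q.
  apply/eqP => e; have := g_inj (Ordinal hp1) (Ordinal hq1) e; case => epq.
  by rewrite epq eqxx in pq.
have getj : forall t, exists j, [/\ j <= size u - n, covers (factor n u j) (rho t) &
    (j = 0 \/ j = k.+1)].
  move=> t; have [j [[hj cj] _]] := huniq (rho t); exists j; split => //.
  apply: (claim1 _ _ j hj cj) => s s' a b hs hs' ea eb; exact: rho_head ea eb.
have [j1 [hj1 c1 o1]] := getj 0.
have [j2 [hj2 c2 o2]] := getj (maxn (g p) (g q)).
have [j3 [hj3 c3 o3]] := getj (g p + g q + 1).
have ekn : k.+1 + n.-1 = k + n by lia.
case el: (nth Diamond u n.-1) => [cl|].
  have hx : forall j, j = 0 \/ j = k.+1 -> [/\ nth Diamond u (j + p) != None,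
      nth Diamond u (j + q) != None & nth Diamond u (j + n.-1) != None].
    move=> j [] ->; first by rewrite !add0n el.
    by rewrite ekn hy.
  have : j1 = j2 \/ j1 = j3 \/ j2 = j3 by lia.
  case=> [e|[e|e]].
  - rewrite -e in c2; have [x1 x2 x3] := hx _ o1.
    have [e1 e2] := claim2 _ _ _ o1 x1 x2 x3 c1 c2; lia.
  - rewrite -e in c3; have [x1 x2 x3] := hx _ o1.
    have [e1 e2] := claim2 _ _ _ o1 x1 x2 x3 c1 c3; lia.
  - rewrite -e in c3; have [x1 x2 x3] := hx _ o2.
    have [e1 e2] := claim2 _ _ _ o2 x1 x2 x3 c2 c3; lia.
have no0 : forall t, ~ covers (factor n u 0) (rho t).
  move=> t c.
  have cs : covers (factor n u 0) pstar.
    move=> x z a b ea eb; have := c x z a b ea eb; rewrite !pkE /keyr.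
    rewrite (WEo _ _ (leq0n _)) add0n in ea.
    rewrite (WEo _ _ (leq0n _)) add0n in eb.
    case: eqP => hx; first by rewrite hx el in ea.
    case: eqP => hz; first by rewrite hz el in eb.
    by rewrite ltn_add2r ltn_mul2l.
  have := uniqW pstar 0 k.+1 (leq0n _) hk1 cs cstar; lia.
have e1 : j1 = k.+1 by case: o1 => // e; rewrite e in c1; case: (no0 _ c1).
have e2 : j2 = k.+1 by case: o2 => // e; rewrite e in c2; case: (no0 _ c2).
rewrite e1 in c1; rewrite e2 in c2.
have [f1 f2] := claim2 k.+1 _ _ (or_intror erefl) Up Uq ltac:(by rewrite ekn hy) c1 c2.
lia.
Qed.



Lemma killer_back n u k : upword n u -> 2 * count_mem Diamond u + 3 <= n ->
  k < size u -> nth Diamond u k = Diamond -> n <= k -> nth Diamond u (k - n) = Diamond.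
Proof.
move=> up hf hk hd hnk.
have up' := upword_rev up.
have hf' : 2 * count_mem Diamond (rev u) + 3 <= n by rewrite count_rev.
have := @killer n (rev u) (size u - k.+1) up' hf'.
have h1 : size u - k.+1 < size u by lia.
have h2 : size u - k.+1 + n < size u by lia.
rewrite (nth_rev _ h1) (nth_rev _ h2) size_rev.
have -> : size u - (size u - k.+1).+1 = k by lia.
have -> : size u - (size u - k.+1 + n).+1 = k - n by lia.
by apply.
Qed.

Lemma dcnt_prefix u j : j <= size u -> dcnt u (iota 0 j) <= count_mem Diamond u.
Proof.
move=> hj; apply: dcnt_le; first exact: iota_uniq.
by apply/allP => m; rewrite mem_iota => /andP[_ h]; lia.
Qed.

Lemma lowcount n u : upword n u -> 2 * count_mem Diamond u + 3 <= n ->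
  forall k, k < size u -> nth Diamond u k = Diamond -> k < n * dcnt u (iota 0 k.+1).
Proof.
move=> up hf; elim/ltn_ind => k IH hk hd.
case: (leqP n k) => hnk; last first.
  have : 0 < dcnt u (iota 0 k.+1).
    rewrite /dcnt -has_count; apply/hasP; exists k; first (rewrite mem_iota; lia).
    by rewrite hd.
  move=> h; apply: (leq_trans hnk); rewrite -{1}(muln1 n) leq_mul2l; lia.
have hd' := killer_back up hf hk hd hnk.
have := IH (k - n) ltac:(lia) ltac:(lia) hd'.
have -> : k.+1 = (k - n).+1 + n by lia.
rewrite iotaD /dcnt count_cat -/(dcnt _ _).
have : 0 < count (fun m => nth Diamond u m == Diamond) (iota (0 + (k - n).+1) n).
  rewrite -has_count; apply/hasP; exists k; first (rewrite mem_iota; lia).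
  by rewrite hd.
move=> h1 h2; rewrite mulnDr.
have : n <= n * count (fun m => nth Diamond u m == Diamond) (iota (0 + (k - n).+1) n).
  by rewrite -{1}(muln1 n) leq_mul2l h1 orbT.
lia.
Qed.

Lemma upchain n u : upword n u -> 2 * count_mem Diamond u + 3 <= n ->
  forall d k, size u - k <= d -> k < size u -> nth Diamond u k = Diamond ->
  exists k', [/\ k' < size u, nth Diamond u k' = Diamond & size u <= k' + n].
Proof.
move=> up hf; elim=> [|d IH] k hd hk hD; first lia.
case: (leqP (size u) (k + n)) => h; first by exists k.
have := killer up hf hD h => hD'.
apply: (IH (k + n)) => //; lia.
Qed.

Lemma count_factor_le n u i : count_mem Diamond (factor n u i) <= count_mem Diamond u.
Proof.
rewrite /factor.
have h1 := count_cat (pred1 Diamond) (take n (drop i u)) (drop n (drop i u)).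
rewrite cat_take_drop in h1.
have h2 := count_cat (pred1 Diamond) (take i u) (drop i u).
rewrite cat_take_drop in h2.
lia.
Qed.

Lemma fact_ge m : m * (m - 1) <= m`!.
Proof.
case: m => [|m] //; rewrite factS subSS subn0 leq_mul2l; apply/orP; right.
case: m => [|m] //; rewrite factS; apply: leq_pmulr; exact: fact_gt0.
Qed.

Theorem main_bound n u : upword n u -> n <= 3 * count_mem Diamond u + 1.
Proof.
move=> up; set f := count_mem Diamond u.
case: (leqP n (3 * f + 1)) => // hbig; exfalso.
have up0 := up; case: up0 => hn hpos hdi hdist huniq.
have f1 : 0 < f by rewrite /f -has_count has_pred1.
have hf : 2 * f + 3 <= n by lia.
have hk0 : index Diamond u < size u by rewrite index_mem.
have hD0 : nth Diamond u (index Diamond u) = Diamond by rewrite nth_index.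
have [k' [hk' hD' hN]] := upchain up hf (leqnn _) hk0 hD0.
have lc := lowcount up hf hk' hD'.
have dc := dcnt_prefix (u := u) (j := k'.+1) hk'.
have hM : size u - n + 1 <= n * f.
  have : n * dcnt u (iota 0 k'.+1) <= n * f by rewrite leq_mul2l dc orbT.
  lia.
set M := size u - n + 1.
pose Cv i := [set pi : 'S_n | coversb (factor n u i) pi].
have cov : n`! <= \sum_(i < M) #|Cv i|.
  apply: leq_trans (union_bound M Cv); rewrite -card_Sn.
  apply: subset_leq_card; apply/subsetP => pi _.
  have [i [[hi ci] _]] := huniq pi.
  have hiM : i < M by rewrite /M; lia.
  apply/bigcupP; exists (Ordinal hiM) => //; rewrite inE; exact/coversP.
have each : forall i : 'I_M, #|Cv i| * (n - f)`! <= n`!.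
  move=> i; have hi : i + n <= size u by have := ltn_ord i; rewrite /M; lia.
  have hc := card_cov (size_factor hi) (hdist i ltac:(have := ltn_ord i; rewrite /M; lia)).
  set d := count_mem Diamond (factor n u i) in hc.
  have hd : d <= f by exact: count_factor_le.
  rewrite -(ffact_fact (n := n) (m := d)); last lia.
  apply: leq_mul => //; apply: leq_fact; lia.
have : n`! * (n - f)`! <= M * n`!.
  have h1 := leq_mul cov (leqnn (n - f)`!).
  apply: (leq_trans h1).
  rewrite big_distrl /=.
  have -> : M * n`! = \sum_(i < M) n`! by rewrite sum_nat_const card_ord.
  by apply: leq_sum => i _; exact: each.
rewrite mulnC leq_pmul2r ?fact_gt0 // => hfM.
have := fact_ge (n - f).
nia.
Qed.



Theorem theorem4 (n : nat) (u : seq letter) :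
  upword n u -> ~~ trivial_word u ->
  n <= 3 * count_mem Diamond u + 1.
Proof.
move=> up _; exact: main_bound up.
Qed.
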